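(* Let $X,Y$ be infinite dimensional Banach lattices which are relatively $s$-decomposable for some $1\le s\le\infty$. If $a=(a_i)\in X_L$ and $b=(b_i)\in\ell_s$, then $ab:=(a_ib_i)\in Y_U$ and $$\|ab\|_{Y_U}\le D_s(X,Y)\,\|b\|_{\ell_s}\,\|a\|_{X_L}.$$
   Context: Banach lattices are real; disjoint means $|x|\wedge|y|=0$. $X,Y$ are relatively $s$-decomposable if there is $D$ with $\|\sum_{i=1}^n y_i\|_Y\le D(\sum_i(\|y_i\|_Y/\|x_i\|_X)^s)^{1/s}\|\sum_{i=1}^n x_i\|_X$ for all $n$ and all pairwise disjoint nonzero $x_1,\dots,x_n\in X$, pairwise disjoint nonzero $y_1,\dots,y_n\in Y$ (max for $s=\infty$); $D_s(X,Y)$ is the infimum of such $D$. $\mathfrak B_n(X)$ is the set of $n$-tuples of pairwise disjoint norm-one elements of $X$. For $a\in\mathbb R^n$: $\|a\|_{X_U(n)}:=\sup\{\|\sum_{i=1}^n a_ix_i\|_X:(x_i)\in\mathfrak B_n(X)\}$; $\Phi_n(a):=\inf\{\|\sum_{i=1}^n a_ix_i\|_X:(x_i)\in\mathfrak B_n(X)\}$; $\|a\|_{X_L(n)}:=\inf\{\sum_{k\in F}\Phi_n(a^k): F\text{ finite}, a^k\in\mathbb R^n, a=\sum_{k\in F}a^k\}$. $X_U$ (resp. $X_L$) is the space of real sequences $a$ with $\|a\|_{X_U}:=\sup_n\|(a_i)_{i=1}^n\|_{X_U(n)}<\infty$ (resp. $\|a\|_{X_L}:=\sup_n\|(a_i)_{i=1}^n\|_{X_L(n)}<\infty$);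 $Y_U$ is defined likewise from $Y$. *)

(* Defs.v *)
From HB Require Import structures.
From mathcomp Require Import all_boot all_order all_algebra.
From mathcomp Require Import all_classical all_reals all_analysis.
Unset Printing Implicit Defensive.
Import Order.TTheory GRing.Theory Num.Theory.
Import numFieldNormedType.Exports.
Local Open Scope classical_set_scope.
Local Open Scope ring_scope.

Record BanachLattice (R : realType) (X : completeNormedModType R) := {
  ble : X -> X -> Prop;
  bjoin : X -> X -> X;
  ble_refl : forall x, ble x x;
  ble_anti : forall x y, ble x y -> ble y x -> x = y;
  ble_trans : forall x y z, ble x y -> ble y z -> ble x z;
  ble_add : forall x y z, ble x y -> ble (x + z) (y + z);
  ble_scale : forall (c : R) x y, 0 <= c -> ble x y -> ble (c *: x) (c *: y);
  bjoin_ubl : forall x y, ble x (bjoin x y);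
  bjoin_ubr : forall x y, ble y (bjoin x y);
  bjoin_lub : forall x y z, ble x z -> ble y z -> ble (bjoin x y) z;
  blattice_norm : forall x y,
    ble (bjoin x (- x)) (bjoin y (- y)) -> `|x| <= `|y|
}.
Arguments BanachLattice {R} X.
Arguments ble {R X} b _ _.
Arguments bjoin {R X} b _ _.

Section BL.
Variables (R : realType) (X : completeNormedModType R) (L : BanachLattice X).

Definition bmeet (x y : X) : X := - bjoin L (- x) (- y).
Definition babs (x : X) : X := bjoin L x (- x).
Definition disjoint (x y : X) : Prop := bmeet (babs x) (babs y) = 0.

Definition frakB (n : nat) : set ('I_n -> X) :=
  [set x | (forall i, `|x i| = 1) /\ (forall i j, i != j -> disjoint (x i) (x j))].

Definition normXU_n (n : nat) (a : 'I_n -> R) : \bar R :=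
  ereal_sup [set (`|\sum_(i < n) a i *: x i|)%:E | x in frakB n].

Definition Phi_n (n : nat) (a : 'I_n -> R) : \bar R :=
  ereal_inf [set (`|\sum_(i < n) a i *: x i|)%:E | x in frakB n].

(* || a ||_{X_L(n)} : infimum over finite decompositions a = sum_{k in F} a^k,
   a finite index set F being encoded as 'I_m *)
Definition normXL_n (n : nat) (a : 'I_n -> R) : \bar R :=
  ereal_inf [set e | exists (m : nat) (c : 'I_m -> 'I_n -> R),
     (forall i, a i = \sum_(k < m) c k i) /\ e = (\sum_(k < m) Phi_n n (c k))%E].

(* || a ||_{X_U} and || a ||_{X_L} for real sequences (value in \bar R;
   membership in X_U / X_L means the value is < +oo) *)
Definition normXU (a : nat -> R) : \bar R :=
  ereal_sup [set normXU_n n (fun i : 'I_n => a i) | n in [set: nat]].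
Definition normXL (a : nat -> R) : \bar R :=
  ereal_sup [set normXL_n n (fun i : 'I_n => a i) | n in [set: nat]].

Definition infinite_dim : Prop :=
  forall n : nat, exists v : 'I_n -> X,
    forall c : 'I_n -> R, \sum_(i < n) c i *: v i = 0 -> forall i, c i = 0.
End BL.
Arguments disjoint {R X} L x y.
Arguments bmeet {R X} L x y.
Arguments babs {R X} L x.
Arguments frakB {R X} L n.
Arguments normXU_n {R X} L {n} a.
Arguments Phi_n {R X} L {n} a.
Arguments normXL_n {R X} L {n} a.
Arguments normXU {R X} L a.
Arguments normXL {R X} L a.
Arguments infinite_dim {R} X.

Definition lsnorm_fin (R : realType) (s : \bar R) (n : nat) (t : 'I_n -> R) : R :=
  match s with
  | EFin r => (\sum_(i < n) `|t i| `^ r) `^ r^-1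
  | _ => \big[Num.max/0]_(i < n) `|t i|
  end.

Arguments lsnorm_fin {R} s {n} t.

(* l_s norm of a real sequence (value in \bar R; b \in l_s iff < +oo) *)
Definition lsnorm (R : realType) (s : \bar R) (b : nat -> R) : \bar R :=
  ereal_sup [set (lsnorm_fin s (fun i : 'I_n => b i))%:E | n in [set: nat]].

Arguments lsnorm {R} s b.

Section Decomp.
Variables (R : realType) (X Y : completeNormedModType R)
  (LX : BanachLattice X) (LY : BanachLattice Y) (s : \bar R).

Definition decomp_const (D : R) : Prop :=
  forall (n : nat) (x : 'I_n -> X) (y : 'I_n -> Y),
    (forall i, x i != 0) -> (forall i j, i != j -> disjoint LX (x i) (x j)) ->
    (forall i, y i != 0) -> (forall i j, i != j -> disjoint LY (y i) (y j)) ->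
    `|\sum_(i < n) y i| <=
      D * lsnorm_fin s (fun i => `|y i| / `|x i|) * `|\sum_(i < n) x i|.

Definition rel_decomposable : Prop := exists D : R, decomp_const D.

Definition Ds : \bar R := ereal_inf [set D%:E | D in decomp_const].
End Decomp.
Arguments decomp_const {R X Y} LX LY s D.
Arguments rel_decomposable {R X Y} LX LY s.
Arguments Ds {R X Y} LX LY s.

(* Main.v *)
Require Import Defs.
From mathcomp Require Import all_boot all_order all_algebra.
From mathcomp Require Import all_classical all_reals all_analysis.
From mathcomp Require Import lra.
Import Order.TTheory GRing.Theory Num.Theory.
Import numFieldNormedType.Exports.
Local Open Scope ring_scope.



Section Lat.
Variables (R : realType) (X : completeNormedModType R) (L : BanachLattice X).
Local Notation le := (ble L).
Local Notation J := (bjoin L).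

Lemma refl x : le x x. Proof. exact: ble_refl. Qed.
Lemma anti {x y} : le x y -> le y x -> x = y. Proof. exact: ble_anti. Qed.
Lemma trans {x y z} : le x y -> le y z -> le x z. Proof. exact: ble_trans. Qed.
Lemma add {x y} z : le x y -> le (x + z) (y + z). Proof. exact: ble_add. Qed.
Lemma scale {c x y} : 0 <= c -> le x y -> le (c *: x) (c *: y). Proof. exact: ble_scale. Qed.
Lemma ubl x y : le x (J x y). Proof. exact: bjoin_ubl. Qed.
Lemma ubr x y : le y (J x y). Proof. exact: bjoin_ubr. Qed.
Lemma lub {x y z} : le x z -> le y z -> le (J x y) z. Proof. exact: bjoin_lub. Qed.

Lemma L_neg u v : le u v -> le (- v) (- u).
Proof.
move=> h; have := add (-u - v) h.
have -> : u + (-u - v) = - v by rewrite addrA subrr add0r.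
have -> : v + (-u - v) = - u by rewrite addrC addrNK.
by [].
Qed.

Lemma L_addl u v w : le u v -> le (w + u) (w + v).
Proof. by move=> h; have := add w h; rewrite (addrC u) (addrC v). Qed.

Lemma L_joinC x y : J x y = J y x.
Proof. by apply: anti; apply: lub; [apply: ubr|apply: ubl|apply: ubr|apply: ubl]. Qed.

Lemma L_join_mono x x' y y' : le x x' -> le y y' -> le (J x y) (J x' y').
Proof. by move=> h1 h2; apply: lub; [exact: trans h1 (ubl _ _) | exact: trans h2 (ubr _ _)]. Qed.

Lemma L_scale_join c x y : 0 < c -> J (c *: x) (c *: y) = c *: J x y.
Proof.
move=> c0; apply: anti.
  by apply: lub; apply: scale; rewrite ?ltW //; [apply: ubl | apply: ubr].
have ci : 0 <= c^-1 by rewrite invr_ge0 ltW.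
have h : le (J x y) (c^-1 *: J (c *: x) (c *: y)).
  apply: lub.
    by rewrite -[x in le x _](scalerK (lt0r_neq0 c0)) //; apply: scale => //; apply: ubl.
  by rewrite -[y in le y _](scalerK (lt0r_neq0 c0)); apply: scale => //; apply: ubr.
have := scale (ltW c0) h.
by rewrite scalerA divff ?lt0r_neq0 // scale1r.
Qed.

Lemma L_join00 : J 0 0 = 0.
Proof. by apply: anti; [apply: lub; apply: refl | apply: ubl]. Qed.

Lemma L_babs_scale c x : babs L (c *: x) = `|c| *: babs L x.
Proof.
rewrite /babs; have [c0|c0|->] := ltrgtP c 0.
- rewrite ltr0_norm //.
  have -> : - (c *: x) = (- c) *: x by rewrite scaleNr.
  have -> : c *: x = (- c) *: (- x) by rewrite scaleNr scalerN opprK.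
  by rewrite L_scale_join ?oppr_gt0 // L_joinC.
- by rewrite gtr0_norm // -scalerN L_scale_join.
- by rewrite normr0 !scale0r oppr0 L_join00.
Qed.

Lemma L_babs_ge0 x : le 0 (babs L x).
Proof.
set A := babs L x.
have h1 : le 0 (A + - x) by have := add (-x) (ubl x (-x)); rewrite subrr.
have h2 : le (A + - x) (A + A) by apply: L_addl; apply: ubr.
have i2 : 0 <= (2:R)^-1 by rewrite invr_ge0 ler0n.
have h3 := @scale (2^-1) _ _ i2 (trans h1 h2).
rewrite scaler0 in h3.
have -> : A = 2^-1 *: (A + A).
  have e : A + A = 2%:R *: A by rewrite scaler_nat mulr2n.
  by rewrite e scalerA mulVf ?scale1r // pnatr_eq0.
exact: h3.
Qed.

Lemma L_meet_lb1 u v : le (bmeet L u v) u.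
Proof. by rewrite /bmeet -[u in le _ u]opprK; apply: L_neg; apply: ubl. Qed.
Lemma L_meet_lb2 u v : le (bmeet L u v) v.
Proof. by rewrite /bmeet -[v in le _ v]opprK; apply: L_neg; apply: ubr. Qed.
Lemma L_meet_glb u v w : le w u -> le w v -> le w (bmeet L u v).
Proof.
move=> h1 h2; rewrite /bmeet -[w]opprK; apply: L_neg.
by apply: lub; apply: L_neg.
Qed.
Lemma L_meet_mono u u' v v' : le u u' -> le v v' -> le (bmeet L u v) (bmeet L u' v').
Proof.
move=> h1 h2; apply: L_meet_glb.
  exact: trans (L_meet_lb1 _ _) h1.
exact: trans (L_meet_lb2 _ _) h2.
Qed.
Lemma L_meet_scale c u v : 0 < c -> bmeet L (c *: u) (c *: v) = c *: bmeet L u v.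
Proof. by move=> c0; rewrite /bmeet -!scalerN L_scale_join // scalerN. Qed.

Lemma L_le_scale a b u : le 0 u -> 0 <= a <= b -> le (a *: u) (b *: u).
Proof.
move=> u0 /andP[a0 ab].
have h : le 0 ((b - a) *: u).
  by have := @scale (b - a) _ _ _ u0; rewrite scaler0; apply; rewrite subr_ge0.
have := add (a *: u) h.
by rewrite add0r -scalerDl subrK.
Qed.

Lemma L_disjoint_scale c d x y : c != 0 -> d != 0 ->
  Defs.disjoint L x y -> Defs.disjoint L (c *: x) (d *: y).
Proof.
move=> c0 d0; rewrite /Defs.disjoint !L_babs_scale => h.
set g := Num.max `|c| `|d|.
have g0 : 0 < g by rewrite lt_max normr_gt0 c0.
apply: anti.
  rewrite -(scaler0 _ g) -h -L_meet_scale //.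
  apply: L_meet_mono; (apply: L_le_scale; first exact: L_babs_ge0);
    rewrite normr_ge0 /= le_max lexx ?orbT //.
apply: L_meet_glb.
  by rewrite -(scaler0 _ `|c|); apply: scale => //; apply: L_babs_ge0.
by rewrite -(scaler0 _ `|d|); apply: scale => //; apply: L_babs_ge0.
Qed.
End Lat.
Arguments L_disjoint_scale {R X L c d x y}.



Section LS.
Variable R : realType.

Lemma powR_subadd (p a b : R) : 0 < p <= 1 -> 0 <= a -> 0 <= b ->
  (a + b) `^ p <= a `^ p + b `^ p.
Proof.
move=> /andP[p0 p1] a0 b0.
have [t0|tp] := eqVneq (a + b) 0.
  have /andP[/eqP a00 /eqP b00] : (a == 0) && (b == 0) by rewrite -paddr_eq0 // t0.
  by rewrite t0 a00 b00 powR0 ?gt_eqF // addr0.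
have t0 : 0 < a + b by rewrite lt0r tp addr_ge0.
set t := a + b in t0 tp *.
have key u : 0 <= u <= t -> t `^ p * (u / t) <= u `^ p.
  move=> /andP[u0 ut].
  have eu : u `^ p = t `^ p * (u / t) `^ p.
    rewrite -powRM; first by rewrite [t * _]mulrC divfK.
      exact: ltW.
    by rewrite divr_ge0 // ltW.
  rewrite eu ler_wpM2l ?powR_ge0 //.
  have [->|uz] := eqVneq u 0; first by rewrite mul0r powR_ge0.
  have u0' : 0 < u by rewrite lt0r uz u0.
  by apply: ger1_powR => //; rewrite divr_gt0 //= ler_pdivrMr // mul1r.
have ha := key a; have hb := key b.
have e : t `^ p = t `^ p * (a / t) + t `^ p * (b / t).
  by rewrite -mulrDr -mulrDl divff // mulr1.
rewrite e lerD ?ha ?hb // ?a0 ?b0 /t ?lerDl ?lerDr //.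
Qed.

Lemma ls_ge0 (s : \bar R) n (t : 'I_n -> R) : 0 <= lsnorm_fin s t.
Proof.
case: s => [r| |] /=; rewrite ?powR_ge0 //;
  by elim/big_ind: _ => // x y hx hy; rewrite le_max hx.
Qed.

Lemma ls_one (s : \bar R) (t : 'I_1 -> R) : (1%:E <= s)%E -> lsnorm_fin s t = `|t ord0|.
Proof.
case: s => [r| |] //= r1.
  rewrite lee_fin in r1.
  rewrite big_ord1 -powRrM mulfV ?powRr1 //.
  by rewrite gt_eqF // (lt_le_trans ltr01 r1).
rewrite big_ord_recl big_ord0.
by rewrite max_l.
Qed.

Lemma ls_pert (s : \bar R) n (t : 'I_n -> R) : (1%:E <= s)%E ->
  exists al : R, 0 <= al /\ forall (e : R) (u : 'I_n -> R), 0 < e ->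
    (forall i, `|u i| = `|t i| \/ `|u i| = e) ->
    lsnorm_fin s u <= lsnorm_fin s t + al * e.
Proof.
case: s => [r| |] //= r1.
- rewrite lee_fin in r1.
  have r0 : 0 < r by rewrite (lt_le_trans ltr01 r1).
  have p01 : 0 < r^-1 <= 1 by rewrite invr_gt0 r0 invf_le1.
  exists (n%:R `^ r^-1); split; first exact: powR_ge0.
  move=> e u e0 hu.
  apply: (le_trans (y := (\sum_(i < n) `|t i| `^ r + n%:R * e `^ r) `^ r^-1)).
    apply: ge0_ler_powR.
    + by rewrite invr_ge0 ltW.
    + by rewrite nnegrE sumr_ge0 // => i _; rewrite powR_ge0.
    + rewrite nnegrE addr_ge0 ?mulr_ge0 ?powR_ge0 //.
      by rewrite sumr_ge0 // => i _; rewrite powR_ge0.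
    have -> : n%:R * e `^ r = \sum_(i < n) e `^ r.
      by rewrite sumr_const card_ord mulr_natl.
    rewrite -big_split /=.
    apply: ler_sum => i _; have [->|->] := hu i.
      by rewrite lerDl powR_ge0.
    by rewrite lerDr powR_ge0.
  apply: (le_trans (powR_subadd _ _ _ p01 _ _)).
  + by rewrite sumr_ge0 // => i _; rewrite powR_ge0.
  + by rewrite mulr_ge0 ?powR_ge0.
  rewrite lerD2l powRM ?ler0n ?powR_ge0 // -powRrM mulfV ?gt_eqF //.
  by rewrite powRr1 // ltW.
- exists 1; split => // e u e0 hu.
  have h0 : 0 <= \big[Num.max/0]_(i < n) `|t i|.
    by elim/big_ind: _ => // x y hx hy; rewrite le_max hx.
  rewrite mul1r; apply: bigmax_le => [|i _].
    by apply: addr_ge0 => //; exact: ltW.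
  have [->|->] := hu i.
    have hi := le_bigmax 0 (fun i : 'I_n => `|t i|) i.
    by apply: (le_trans hi); rewrite lerDl; exact: ltW.
  by rewrite lerDr.
Qed.

Lemma ls_coord (s : \bar R) n (t : 'I_n -> R) i : (1%:E <= s)%E -> `|t i| <= lsnorm_fin s t.
Proof.
case: s => [r| |] //= r1.
  rewrite lee_fin in r1.
  have r0 : 0 < r by rewrite (lt_le_trans ltr01 r1).
  rewrite -[X in X <= _](powRr1 (normr_ge0 (t i))) -(mulfV (lt0r_neq0 r0)) powRrM.
  apply: ge0_ler_powR.
  + by rewrite invr_ge0 ltW.
  + by rewrite nnegrE powR_ge0.
  + by rewrite nnegrE sumr_ge0 // => j _; rewrite powR_ge0.
  rewrite (bigD1 i) //= lerDl sumr_ge0 // => j _; rewrite powR_ge0.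
exact: (le_bigmax _ (fun i => `|t i|) i).
Qed.
End LS.



Lemma pert_bound (R : realType) (c b e : R) : 0 < e <= 1 ->
  `|c * b - (if c == 0 then e else c) * (if b == 0 then e else b)|
    <= e * (`|c| + `|b| + 1).
Proof.
move=> /andP[e0 e1].
have ne : `|e| = e by rewrite gtr0_norm.
have nc := normr_ge0 c; have nb := normr_ge0 b.
case: eqP => [->|_]; case: eqP => [->|_].
- rewrite mul0r sub0r normrN normrM ne normr0; nra.
- rewrite mul0r sub0r normrN normrM ne normr0; nra.
- rewrite mulr0 sub0r normrN normrM ne normr0; nra.
- rewrite subrr normr0; nra.
Qed.

Section Main.
Variables (R : realType) (X Y : completeNormedModType R)
  (LX : BanachLattice X) (LY : BanachLattice Y) (s : \bar R).

Lemma nz_of_norm1 (Z : completeNormedModType R) (z : Z) (c : R) :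
  `|z| = 1 -> c != 0 -> c *: z != 0.
Proof.
move=> zn c0; rewrite scaler_eq0 negb_or c0 /=.
by apply/eqP => z0; move: zn; rewrite z0 normr0 => /eqP; rewrite eq_sym oner_eq0.
Qed.

Arguments nz_of_norm1 {Z z c}.

Lemma K (D l : R) n (c b : 'I_n -> R) (x : 'I_n -> X) (y : 'I_n -> Y) :
  (1%:E <= s)%E -> decomp_const LX LY s D -> 0 <= D ->
  lsnorm_fin s b <= l -> frakB LX n x -> frakB LY n y ->
  `|\sum_(i < n) (c i * b i) *: y i| <= D * l * `|\sum_(i < n) c i *: x i|.
Proof.
move=> s1 hD D0 hl [xn xd] [yn yd].
have l0 : 0 <= l := le_trans (ls_ge0 _ s _ b) hl.
have [al [al0 hal]] := ls_pert _ s _ b s1.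
set w := `|\sum_(i < n) (c i * b i) *: y i|.
set q := `|\sum_(i < n) c i *: x i|.
set K := \sum_(i < n) (`|c i| + `|b i| + 1).
have K0 : 0 <= K by rewrite sumr_ge0 // => i _; rewrite !addr_ge0.
have q0 : 0 <= q by rewrite normr_ge0.
set M := D * al * q + D * l * n%:R + D * al * n%:R + K.
have M0 : 0 <= M by rewrite !addr_ge0 // !mulr_ge0.
suff main : forall e, 0 < e <= 1 -> w <= D * l * q + e * M.
  apply/ler_addgt0Pr => e e0.
  set e' := Num.min 1 (e / (M + 1)).
  have M1 : 0 < M + 1 by rewrite ltr_wpDl.
  have e'0 : 0 < e' <= 1.
    by rewrite lt_min ltr01 divr_gt0 //= ge_min lexx.
  apply: le_trans (main e' e'0) _; rewrite lerD2l.
  have h1 : e' <= e / (M + 1) by rewrite ge_min lexx orbT.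
  apply: (le_trans (ler_wpM2r M0 h1)).
  rewrite mulrAC ler_pdivrMr // ler_pM2l //; lra.
move=> e /andP[e0 e1].
pose g i := if c i == 0 then e else c i.
pose be i := if b i == 0 then e else b i.
have g0 i : g i != 0 by rewrite /g; have [_|//] := eqVneq (c i) 0; exact: lt0r_neq0.
have be0 i : be i != 0 by rewrite /be; have [_|//] := eqVneq (b i) 0; exact: lt0r_neq0.
have h := hD n (fun i => g i *: x i) (fun i => (g i * be i) *: y i).
have {h} h := h (fun i => nz_of_norm1 (xn i) (g0 i))
  (fun i j ij => L_disjoint_scale (g0 i) (g0 j) (xd i j ij))
  (fun i => nz_of_norm1 (yn i) (mulf_neq0 (g0 i) (be0 i)))
  (fun i j ij => L_disjoint_scale (mulf_neq0 (g0 i) (be0 i))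
      (mulf_neq0 (g0 j) (be0 j)) (yd i j ij)).
have e2 : (fun i => `|(g i * be i) *: y i| / `|g i *: x i|) = (fun i => `|be i|).
  apply: funext => i; rewrite !normrZ xn yn !mulr1. by rewrite mulrAC divff ?mul1r // normr_eq0.
rewrite e2 in h.
have hls : lsnorm_fin s (fun i => `|be i|) <= l + al * e.
  apply: le_trans (hal e _ e0 _) _; last by rewrite lerD2r.
  move=> i; rewrite normr_id /be; case: eqP => [->|_]; last by left.
  by right; rewrite gtr0_norm.
have hx : `|\sum_(i < n) g i *: x i| <= q + n%:R * e.
  have -> : \sum_(i < n) g i *: x i =
      \sum_(i < n) c i *: x i + \sum_(i < n) (g i - c i) *: x i.
    by rewrite -big_split /=; apply: eq_bigr => i _; rewrite -scalerDl addrC subrK.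
  apply: (le_trans (ler_normD _ _)); rewrite lerD2l.
  apply: (le_trans (ler_norm_sum _ _ _)).
  have -> : n%:R * e = \sum_(i < n) e by rewrite sumr_const card_ord mulr_natl.
  apply: ler_sum => i _; rewrite normrZ xn mulr1 /g.
  case: eqP => [->|_]; first by rewrite subr0 gtr0_norm.
  by rewrite subrr normr0 ltW.
have hy : w <= `|\sum_(i < n) (g i * be i) *: y i| + e * K.
  rewrite /w.
  have -> : \sum_(i < n) (c i * b i) *: y i =
      \sum_(i < n) (g i * be i) *: y i + \sum_(i < n) (c i * b i - g i * be i) *: y i.
    by rewrite -big_split /=; apply: eq_bigr => i _; rewrite -scalerDl addrC subrK.
  apply: (le_trans (ler_normD _ _)); rewrite lerD2l.
  apply: (le_trans (ler_norm_sum _ _ _)).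
  rewrite /K mulr_sumr; apply: ler_sum => i _; rewrite normrZ yn mulr1.
  by apply: pert_bound; rewrite e0 e1.
have ls0 := ls_ge0 _ s _ (fun i => `|be i|).
have hm : D * lsnorm_fin s (fun i => `|be i|) * `|\sum_(i < n) g i *: x i|
    <= D * (l + al * e) * (q + n%:R * e).
  by rewrite ler_pM // ?mulr_ge0 // ler_wpM2l.
apply: (le_trans hy); apply: le_trans (lerD (le_trans h hm) (lexx (e * K))) _.
rewrite /M.
have n0 : 0 <= (n%:R : R) by [].
have e1' : 0 <= 1 - e by rewrite subr_ge0.
have t1 : 0 <= D * al * n%:R * (e * (1 - e)).
  by apply: mulr_ge0; [rewrite !mulr_ge0 | rewrite mulr_ge0 // ltW].
nra.
Qed.
End Main.



Section M2.
Variable R : realType.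

Lemma L1 (w k : R) (S : set \bar R) : 0 < k ->
  (forall e, S e -> (w%:E <= k%:E * e)%E) -> (w%:E <= k%:E * ereal_inf S)%E.
Proof.
move=> k0 h; rewrite -lee_pdivrMl //.
by apply: le_ereal_inf_tmp => e Se; rewrite lee_pdivrMl // h.
Qed.

Lemma nonzero_of_infdim (Z : completeNormedModType R) :
  infinite_dim Z -> exists z : Z, z != 0.
Proof.
move=> /(_ 1%N) [v hv]; exists (v ord0); apply/eqP => v0.
have := hv (fun _ => 1) _ ord0; rewrite big_ord1 v0 scaler0 => /(_ erefl) /eqP.
by rewrite oner_eq0.
Qed.

Lemma Phi_ge0 (Z : completeNormedModType R) (L : BanachLattice Z) n (c : 'I_n -> R) :
  (0 <= Phi_n L c)%E.
Proof. by apply: le_ereal_inf_tmp => _ [x _ <-]; rewrite lee_fin. Qed.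

Lemma normXLn_ge0 (Z : completeNormedModType R) (L : BanachLattice Z) n (c : 'I_n -> R) :
  (0 <= normXL_n L c)%E.
Proof.
apply: le_ereal_inf_tmp => _ [m [d [_ ->]]].
by apply: sume_ge0 => k _; apply: Phi_ge0.
Qed.
End M2.

Section M3.
Variables (R : realType) (X Y : completeNormedModType R)
  (LX : BanachLattice X) (LY : BanachLattice Y) (s : \bar R).

Lemma D_ge1 D : (exists x0 : X, x0 != 0) -> (exists y0 : Y, y0 != 0) ->
  (1%:E <= s)%E -> decomp_const LX LY s D -> 1 <= D.
Proof.
move=> [x0 x00] [y0 y00] s1 hD.
have := hD 1%N (fun _ => x0) (fun _ => y0) (fun _ => x00) _ (fun _ => y00) _.
have n1 i j : i != j :> 'I_1 -> False by rewrite !ord1.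
move=> /(_ (fun i j ij => False_ind _ (n1 i j ij)) (fun i j ij => False_ind _ (n1 i j ij))).
rewrite !big_ord1 ls_one // ger0_norm ?divr_ge0 // -mulrA divfK ?normr_eq0 //.
have y0p : 0 < `|y0| by rewrite normr_gt0.
by rewrite -{1}[`|y0|]mul1r ler_pM2r.
Qed.
End M3.

Section M4.
Variables (R : realType) (X Y : completeNormedModType R)
  (LX : BanachLattice X) (LY : BanachLattice Y) (s : \bar R).

Lemma claimA (a b : nat -> R) D l mu :
  (1%:E <= s)%E -> decomp_const LX LY s D -> 1 <= D ->
  lsnorm s b = l%:E -> normXL LX a = mu%:E -> 0 <= l -> 0 <= mu ->
  (normXU LY (fun i => (a i * b i)%R) <= (D * l * mu)%:E)%E.
Proof.
move=> s1 hD D1 hl hm l0 mu0.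
have D0 : 0 < D by apply: lt_le_trans D1.
apply: ge_ereal_sup => _ [n _ <-].
apply: ge_ereal_sup => _ [y yB <-].
rewrite lee_fin.
set w := `|_|.
apply/ler_addgt0Pr => e e0.
have Dm1 : 0 < D * mu + 1 by rewrite ltr_wpDl // mulr_ge0 // ltW.
pose dl := e / (D * mu + 1).
have dl0 : 0 < dl by rewrite divr_gt0.
suff : w <= D * (l + dl) * mu.
  move/le_trans; apply.
  rewrite mulrDr mulrDl lerD2l /dl mulrCA mulrA -[X in _ <= X]mulr1.
  have -> : e * D / (D * mu + 1) * mu = e * (D * mu / (D * mu + 1)).
    by rewrite mulrA mulrAC -[e * D * mu]mulrA.
  apply: ler_wpM2l; first exact: ltW.
  by rewrite ler_pdivrMr // mul1r lerDl.
have l' : 0 < l + dl by rewrite ltr_wpDl.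
have hls : lsnorm_fin s (fun i : 'I_n => b i) <= l + dl.
  have : ((lsnorm_fin s (fun i : 'I_n => b i))%:E <= lsnorm s b)%E.
    by apply: ereal_sup_ubound; exists n.
  by rewrite hl lee_fin => h; apply: le_trans h _; rewrite lerDl; exact: ltW.
have hXL : (normXL_n LX (fun i : 'I_n => a i) <= mu%:E)%E.
  by rewrite -hm; apply: ereal_sup_ubound; exists n.
have kpos : 0 < D * (l + dl) by rewrite mulr_gt0.
suff : (w%:E <= (D * (l + dl))%:E * normXL_n LX (fun i : 'I_n => a i))%E.
  move=> h; rewrite -lee_fin; apply: le_trans h _; rewrite (EFinM (D * (l + dl)) mu).
  by apply: lee_wpmul2l => //; rewrite lee_fin; exact: ltW.
apply: L1 => // _ [m [c [hc ->]]].
have ew : \sum_(i < n) (a i * b i) *: y i = \sum_(k < m) \sum_(i < n) (c k i * b i) *: y i.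
  rewrite exchange_big /=; apply: eq_bigr => i _.
  by rewrite hc mulr_suml scaler_suml.
apply: (@le_trans _ _ (\sum_(k < m) `|\sum_(i < n) (c k i * b i) *: y i|)%:E).
  by rewrite lee_fin /w ew; exact: ler_norm_sum.
rewrite -sumEFin ge0_sume_distrr; last by move=> k _; apply: Phi_ge0.
apply: lee_sum => k _.
apply: L1 => // _ [x xB <-].
rewrite -EFinM lee_fin.
exact: (@K _ _ _ LX LY s D (l + dl) n (c k) (fun i => b i) x y s1 hD (ltW D0) hls xB yB).
Qed.
End M4.

Theorem mainTheorem10 (R : realType) (X Y : completeNormedModType R)
  (LX : BanachLattice X) (LY : BanachLattice Y) (s : \bar R) (a b : nat -> R) :
  infinite_dim X -> infinite_dim Y ->
  (1%:E <= s)%E ->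
  rel_decomposable LX LY s ->
  (normXL LX a < +oo)%E -> (lsnorm s b < +oo)%E ->
  (normXU LY (fun i => (a i * b i)%R) < +oo)%E /\
  (normXU LY (fun i => (a i * b i)%R) <= Ds LX LY s * lsnorm s b * normXL LX a)%E.
Proof.
move=> hX hY s1 [D0 hD0] ha hb.
have nx := nonzero_of_infdim _ _ hX; have ny := nonzero_of_infdim _ _ hY.
have Dge D : decomp_const LX LY s D -> 1 <= D := fun h => D_ge1 _ _ _ LX LY s D nx ny s1 h.
have lb0 : (0 <= lsnorm s b)%E.
  apply: (@le_trans _ _ (lsnorm_fin s (fun i : 'I_0 => b i))%:E).
    by rewrite lee_fin ls_ge0.
  by apply: ereal_sup_ubound; exists 0%N.
have la0 : (0 <= normXL LX a)%E.
  apply: (@le_trans _ _ (normXL_n LX (fun i : 'I_0 => a i))).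
    exact: normXLn_ge0.
  by apply: ereal_sup_ubound; exists 0%N.
have lfin : lsnorm s b \is a fin_num by rewrite ge0_fin_numE.
have afin : normXL LX a \is a fin_num by rewrite ge0_fin_numE.
have hl : lsnorm s b = (fine (lsnorm s b))%:E by rewrite fineK.
have hm : normXL LX a = (fine (normXL LX a))%:E by rewrite fineK.
move: (fine (lsnorm s b)) (fine (normXL LX a)) hl hm => l mu hl hm.
have l0 : 0 <= l by rewrite -lee_fin -hl.
have mu0 : 0 <= mu by rewrite -lee_fin -hm.
have A D : decomp_const LX LY s D ->
    (normXU LY (fun i => (a i * b i)%R) <= (D * l * mu)%:E)%E.
  by move=> hD; exact: (@claimA _ _ _ LX LY s a b D l mu s1 hD (Dge D hD) hl hm l0 mu0).
split.
  by apply: le_lt_trans (A D0 hD0) _; exact: ltry.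
rewrite hl hm -muleA -EFinM.
have [P0|Pp] := eqVneq (l * mu) 0.
  by rewrite P0 mule0; have := A D0 hD0; rewrite -mulrA P0 mulr0.
have Pp' : 0 < l * mu by rewrite lt0r Pp mulr_ge0.
rewrite -lee_pdivrMr //.
apply: le_ereal_inf_tmp => _ [D hD <-].
by rewrite lee_pdivrMr // -EFinM mulrA; exact: A.
Qed.
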